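(* Let $\mathbf{x}$ be an infinite word over a finite alphabet. Then $\mathrm{rep}(\mathbf{x})=1$ if and only if $\mathrm{dio}(\mathbf{x})=+\infty$, and $\mathrm{rep}(\mathbf{x})=+\infty$ if and only if $\mathrm{dio}(\mathbf{x})=1$. Furthermore, if $1<\mathrm{dio}(\mathbf{x})<+\infty$, then $$\mathrm{rep}(\mathbf{x})=\frac{\mathrm{dio}(\mathbf{x})}{\mathrm{dio}(\mathbf{x})-1}\le\frac{\mathrm{ice}(\mathbf{x})}{\mathrm{ice}(\mathbf{x})-1}$$ (the right-hand side being $+\infty$ if $\mathrm{ice}(\mathbf{x})=1$).
   Context: For $\mathbf{x}=x_1x_2\ldots$, $x_i^j=x_i\cdots x_j$, $r(n,\mathbf{x})=\min\{m\ge1:\ x_i^{i+n-1}=x_{m-n+1}^{m}\text{ for some } 1\le i\le m-n\}$ and $\mathrm{rep}(\mathbf{x})=\liminf_{n\to\infty}r(n,\mathbf{x})/n$. For a finite word $W$ and real $w\ge1$, $W^w$ is the concatenation of $\lfloor w\rfloor$ copies of $W$ followed by the prefix of $W$ of length $\lceil (w-\lfloor w\rfloor)|W|\rceil$. The initial critical exponent $\mathrm{ice}(\mathbf{x})$ is the supremum of the reals $\rho$ for which there are arbitrarily long prefixes $V$ of $\mathbf{x}$ such that $V^\rho$ is a prefix of $\mathbf{x}$. The Diophantine exponent $\mathrm{dio}(\mathbf{x})$ is the supremum of the reals $\rho$ for which there are arbitrarily long prefixes of $\mathbf{x}$ of the form $UV^w$, with $U,V$ finite words and $w$ real, such that $|UV^w|/|UV|\ge\rho$.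 One has $1\le\mathrm{ice}(\mathbf{x})\le\mathrm{dio}(\mathbf{x})\le+\infty$. *)

(* Defs.v *)
From HB Require Import structures.
From mathcomp Require Import all_boot all_order all_algebra.
From mathcomp Require Import all_classical all_reals.
From mathcomp Require Import ereal topology normedtype sequences.
Set Implicit Arguments. Unset Strict Implicit. Unset Printing Implicit Defensive.
Import Order.TTheory GRing.Theory Num.Theory.
Local Open Scope classical_set_scope.
Local Open Scope ring_scope.

(* An infinite word x = x_1 x_2 ... over a finite alphabet A is a map
   x : nat -> A, with the paper's letter x_k being  x (k-1)  (0-based). *)

Section Words.
Variable A : finType.
Variable R : realType.

Definition pref (x : nat -> A) (L : nat) : seq A := mkseq x L.

Definition is_prefix (x : nat -> A) (s : seq A) : Prop := s = pref x (size s).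

Definition wpow (W : seq A) (w : R) : seq A :=
  flatten (nseq (Num.truncn w) W) ++
  take `|Num.ceil ((w - (Num.truncn w)%:R) * (size W)%:R)|%N W.

(* m is admissible in the definition of r(n,x): m >= 1 and
   x_i^{i+n-1} = x_{m-n+1}^m for some 1 <= i <= m - n. *)
Definition r_adm (x : nat -> A) (n m : nat) : Prop :=
  (1 <= m)%N /\ exists i : nat, (1 <= i)%N /\ (i + n <= m)%N /\
    forall k : nat, (k < n)%N -> x (i - 1 + k)%N = x (m - n + k)%N.

(* r(n,x) = min of admissible m (as an extended real; it is +oo only if no
   admissible m exists, which never happens over a finite alphabet). *)
Definition rfun (x : nat -> A) (n : nat) : \bar R :=
  ereal_inf [set ((m%:R : R)%:E) | m in [set m | r_adm x n m]].

Definition rep (x : nat -> A) : \bar R :=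
  limn_einf (fun n : nat => (rfun x n * ((n%:R : R)^-1)%:E)%E).

Definition ice (x : nat -> A) : \bar R :=
  ereal_sup [set (rho%:E) | rho in [set rho : R | 1 <= rho /\
     forall N : nat, exists V : seq A,
       (N <= size V)%N /\ is_prefix x V /\ is_prefix x (wpow V rho)]].

Definition dio (x : nat -> A) : \bar R :=
  ereal_sup [set (rho%:E) | rho in [set rho : R |
     forall N : nat, exists (U V : seq A) (w : R),
       (0 < size V)%N /\ 1 <= w /\
       (N <= size (U ++ wpow V w))%N /\ is_prefix x (U ++ wpow V w) /\
       rho <= (size (U ++ wpow V w))%:R / (size (U ++ V))%:R]].

End Words.

(* Main.v *)
Require Import Defs.
From HB Require Import structures.
From mathcomp Require Import all_boot all_order all_algebra.
From mathcomp Require Import all_classical all_reals.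
From mathcomp Require Import ereal topology normedtype sequences.
From mathcomp Require Import zify ring lra.
Import Order.TTheory GRing.Theory Num.Theory.
Local Open Scope ring_scope.

Section Aux.
Variables (R : realType) (A : finType).

Lemma size_flatten_nseq (V : seq A) t :
  size (flatten (nseq t V)) = (t * size V)%N.
Proof. by elim: t => //= t IH; rewrite size_cat IH mulSn. Qed.

Lemma nth_flatten_nseq (d : A) V t j : (j < t * size V)%N ->
  nth d (flatten (nseq t V)) j = nth d V (j %% size V).
Proof.
elim: t j => [|t IH] j //=; rewrite mulSn => hj.
rewrite nth_cat; case: ltnP => hjV; first by rewrite modn_small.
rewrite IH; last by lia.
by rewrite -{2}(subnK hjV) modnDr.
Qed.

Lemma nth_wpow (d : A) V (w : R) j : (0 < size V)%N ->
  (j < size (wpow V w))%N ->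
  nth d (wpow V w) j = nth d V (j %% size V).
Proof.
move=> V0; rewrite /wpow size_cat size_flatten_nseq nth_cat size_flatten_nseq.
move=> h2; case: ltnP => h1; first exact: nth_flatten_nseq.
move: h2; rewrite size_take_min => h2.
rewrite nth_take; last by lia.
have h3 : (j - Num.truncn w * size V < size V)%N by lia.
rewrite -{2}(subnK h1) addnC modnMDl modn_small //.
Qed.

Lemma wpow_facts (V : seq A) (w : R) : (0 < size V)%N -> 1 <= w ->
  exists c : nat, [/\ size (wpow V w) = (Num.truncn w * size V + c)%N,
     (c <= size V)%N,
     (w - (Num.truncn w)%:R) * (size V)%:R <= c%:R &
     forall z : nat, (w - (Num.truncn w)%:R) * (size V)%:R = z%:R -> c = z].
Proof.
move=> V0 w1.
have /andP[ht1 ht2] := truncn_itv (le_trans ler01 w1).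
set t := Num.truncn w in ht1 ht2 *.
set y := (w - t%:R) * (size V)%:R.
have q0 : (0 : R) < (size V)%:R by rewrite ltr0n.
have y0 : 0 <= y by rewrite /y mulr_ge0 // subr_ge0.
have yq : y <= (size V)%:R.
  rewrite /y -[X in _ <= X]mul1r ler_pM2r //; rewrite -natr1 in ht2; lra.
have : 0 <= Num.ceil y by rewrite ceil_ge0; lra.
case hk : (Num.ceil y) => [k|k] // _.
have kq : (k <= size V)%N.
  have : Num.ceil y <= (size V)%:Z by rewrite ceil_le_int.
  by rewrite hk.
exists k; split => //.
- rewrite /wpow size_cat size_flatten_nseq size_take_min /y hk /=.
  by rewrite (minn_idPl kq).
- by have := ceil_ge y; rewrite hk.
- move=> z yz; have := intrKceil (R:=R) z; change ((z%:Z)%:~R) with (z%:R : R); rewrite -yz hk.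
  by case.
Qed.

Lemma prefP (x : nat -> A) s : is_prefix x s <->
  forall j, (j < size s)%N -> nth (x 0%N) s j = x j.
Proof.
split.
- by move=> -> j; rewrite size_mkseq => hj; rewrite nth_mkseq.
- move=> H; apply: (@eq_from_nth _ (x 0%N)); first by rewrite size_mkseq.
  by move=> j hj; rewrite H // nth_mkseq.
Qed.

End Aux.

Section Main.
Variables (R : realType) (A : finType) (x : nat -> A).

Definition u n : \bar R := (rfun R x n * ((n%:R : R)^-1)%:E)%E.

Definition dset : set R := [set rho : R |
     forall N : nat, exists (U V : seq A) (w : R),
       (0 < size V)%N /\ 1 <= w /\
       (N <= size (U ++ wpow V w))%N /\ is_prefix x (U ++ wpow V w) /\
       rho <= (size (U ++ wpow V w))%:R / (size (U ++ V))%:R].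

Lemma dioE : dio R x = ereal_sup [set rho%:E | rho in dset].
Proof. by []. Qed.

Lemma liminfE (v : (\bar R)^nat) : limn_einf v = ereal_sup (range (einfs v)).
Proof. rewrite limn_einf_lim; apply/cvg_lim => //; exact: cvg_einfs_sup. Qed.

Lemma rep_le_of (b : \bar R) :
  (forall N, exists2 n, (N <= n)%N & (u n <= b)%E) -> (rep R x <= b)%E.
Proof.
move=> H; rewrite /rep liminfE; apply: ge_ereal_sup => _ [N _ <-].
have [n Nn hn] := H N; apply: le_trans hn.
by apply: ereal_inf_lbound; exists n.
Qed.

Lemma rep_lt_ex (c : \bar R) : (rep R x < c)%E ->
  forall N, exists2 n, (N <= n)%N & (u n < c)%E.
Proof.
rewrite /rep liminfE => h N.
have h2 : (einfs u N < c)%E.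
  by apply: le_lt_trans h; apply: ereal_sup_ubound; exists N.
by have [_ [n Nn <-] hn] := ereal_inf_lt h2; exists n.
Qed.

Lemma rep_ge1 : (1 <= rep R x)%E.
Proof.
rewrite /rep liminfE; apply: le_ereal_sup_tmp; exists (einfs u 1); first by exists 1%N.
apply: le_ereal_inf_tmp => _ [n /= n1 <-].
rewrite /u lee_pdivlMr ?ltr0n // mul1e.
apply: le_ereal_inf_tmp => _ [m [m1 [i [i1 [hin _]]]] <-].
by rewrite lee_fin ler_nat; lia.
Qed.

End Main.

Lemma adm_of (R : realType) (A : finType) (x : nat -> A) (U V : seq A) (w : R) :
  (0 < size V)%N -> is_prefix x (U ++ wpow V w) ->
  (size U + size V < size U + size (wpow V w))%N ->
  r_adm x (size U + size (wpow V w) - (size U + size V)) (size U + size (wpow V w)).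
Proof.
move=> V0 /prefP hP hlt.
set L := (size U + size (wpow V w))%N in hlt *.
set n := (L - _)%N.
split; first by lia.
exists (size U).+1; split; first done; split; first by rewrite /n /L in hlt *; lia.
move=> k0 hk0; rewrite subn1 /=.
have -> : (L - n + k0 = size U + (size V + k0))%N by rewrite /n /L in hk0 hlt *; lia.
have s1 : (k0 < size (wpow V w))%N by rewrite /n /L in hk0 hlt *; lia.
have s2 : (size V + k0 < size (wpow V w))%N by rewrite /n /L in hk0 hlt *; lia.
rewrite -(hP (size U + k0)); last by rewrite size_cat ltn_add2l.
rewrite -(hP (size U + (size V + k0))); last by rewrite size_cat ltn_add2l.
rewrite !(nth_cat _ U) !ltnNge !leq_addr /= !addKn.
by rewrite !nth_wpow // modnDl.
Qed.


Section Main2.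
Variables (R : realType) (A : finType) (x : nat -> A).

Lemma rep_le_f rho : @dset R A x rho -> 1 < rho -> (rep R x <= (rho/(rho-1))%:E)%E.
Proof.
move=> hS r1; apply: rep_le_of => N.
set k := (Num.truncn (rho/(rho-1))).+1.
have hk : rho/(rho-1) < k%:R := truncnS_gt _.
have [U [V [w [V0 [w1 [hN [hP hr]]]]]]] := hS (N.+1 * k)%N.
have hL : size (U ++ wpow V w) = (size U + size (wpow V w))%N by rewrite size_cat.
have hp : size (U ++ V) = (size U + size V)%N by rewrite size_cat.
move: hN hP hr; rewrite hL hp; set L := (size U + _)%N; set p := (size U + size V)%N.
move=> hN hP hr.
have p0 : (0 < p)%N by rewrite /p; lia.
have p0R : (0:R) < p%:R by rewrite ltr0n.
have hrp : rho * p%:R <= L%:R by rewrite -ler_pdivlMr.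
have pL : (p < L)%N.
  rewrite -(ltr_nat R); apply: lt_le_trans hrp.
  by rewrite -[X in X < _]mul1r ltr_pM2r.
have hk' : rho <= k%:R * (rho - 1).
  by rewrite -ler_pdivrMr; [apply: ltW|lra].
set n := (L - p)%N.
have nN : (N.+1 <= n)%N.
  rewrite -(ler_nat R) /n natrB; last by lia.
  have : (N.+1 * k)%:R <= L%:R :> R by rewrite ler_nat.
  rewrite natrM => hNk.
  have N1 : (0:R) < N.+1%:R by rewrite ltr0n.
  have h1 : 0 <= (rho - 1) * (L%:R - N.+1%:R * k%:R) by rewrite mulr_ge0 // ?subr_ge0 //; lra.
  have h2 : 0 <= N.+1%:R * (k%:R * (rho - 1) - rho) by rewrite mulr_ge0 // ?subr_ge0 //; lra.
  have h4 : 0 <= rho * (L%:R - p%:R - N.+1%:R).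
    have -> : rho * (L%:R - p%:R - N.+1%:R) = (rho - 1) * (L%:R - N.+1%:R * k%:R)
       + N.+1%:R * (k%:R * (rho - 1) - rho) + (L%:R - rho * p%:R) by ring.
    by apply: addr_ge0; [apply: addr_ge0 | rewrite subr_ge0].
  move: h4; rewrite pmulr_rge0; [lra|lra].
exists n; first lia.
have n0 : (0:R) < n%:R by rewrite ltr0n; lia.
rewrite /u lee_pdivrMr // -EFinM.
have hadm : r_adm x n L by apply: adm_of.
apply: le_trans (_ : (L%:R)%:E <= _)%E.
  by apply: ereal_inf_lbound; exists L.
rewrite lee_fin mulrAC ler_pdivlMr; last lra.
rewrite /n natrB; last by lia.
have -> : rho * (L%:R - p%:R) = L%:R * (rho - 1) + (L%:R - rho * p%:R) by ring.
by rewrite lerDl subr_ge0.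
Qed.

End Main2.

Section Main3.
Variables (R : realType) (A : finType) (x : nat -> A).

Lemma dset_of_rep (c : R) : 1 < c -> (rep R x < c%:E)%E -> @dset R A x (c/(c-1)).
Proof.
move=> c1 hr N.
have [n nN hn] := @rep_lt_ex R A x _ hr N.+1.
have n0 : (0:R) < n%:R by rewrite ltr0n; lia.
move: hn; rewrite /u lte_pdivrMr // -EFinM => hn.
have [_ [m hm <-] hmn] := ereal_inf_lt hn.
rewrite lte_fin in hmn.
case: hm => m1 [i [i1 [hin H]]].
set q := (m - n - (i - 1))%N.
set M := (m - (i - 1))%N.
have q0 : (0 < q)%N by rewrite /q; lia.
have hMq : (M = q + n)%N by rewrite /M /q; lia.
have per : forall j, (j < M)%N -> x (i - 1 + j) = x (i - 1 + j %% q).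
  elim/ltn_ind => j IH hj.
  case: (ltnP j q) => hjq; first by rewrite modn_small.
  have e : j = (q + (j - q))%N by lia.
  rewrite {1}e addnA (_ : (i - 1 + q = m - n)%N); last by rewrite /q; lia.
  rewrite -H; last by lia.
  rewrite IH; [|lia|lia].
  by rewrite {2}e modnDl.
pose U := pref x (i - 1).
pose V := mkseq (fun j => x (i - 1 + j)) q.
pose w : R := M%:R / q%:R.
have sV : size V = q by rewrite size_mkseq.
have sU : size U = (i - 1)%N by rewrite size_mkseq.
have q0R : (0:R) < q%:R by rewrite ltr0n.
have w1 : 1 <= w by rewrite /w ler_pdivlMr // mul1r ler_nat; lia.
have V0 : (0 < size V)%N by rewrite sV.
have [cc [hsz hcq hyc hz]] := @wpow_facts R A V w V0 w1.
set t := Num.truncn w in hsz hcq hyc hz.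
have wq : w * q%:R = M%:R by rewrite /w divfK // gt_eqF.
have tq : (t * q <= M)%N.
  rewrite -(ler_nat R) natrM -wq ler_pM2r //.
  by rewrite truncn_le; apply: le_trans w1.
have ecc : cc = (M - t * q)%N.
  by apply: hz; rewrite sV (natrB _ tq) mulrBl wq natrM.
have sW : size (wpow V w) = M by rewrite hsz sV ecc; lia.
have sUW : size (U ++ wpow V w) = m by rewrite size_cat sU sW /M; lia.
exists U, V, w; split => //; split => //; split; first by rewrite sUW; lia.
split.
  apply/prefP => j; rewrite sUW => hj.
  rewrite nth_cat sU; case: ltnP => hj1.
    by rewrite nth_mkseq.
  rewrite nth_wpow //; last by rewrite sW /M; lia.
  rewrite sV nth_mkseq; last by rewrite ltn_pmod.
  rewrite -per; last by rewrite /M; lia.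
  by rewrite subnKC.
rewrite sUW size_cat sU sV.
have -> : (i - 1 + q = m - n)%N by rewrite /q; lia.
have mn : (n < m)%N by lia.
have mn0 : (0:R) < (m - n)%N%:R by rewrite ltr0n; lia.
rewrite ler_pdivrMr; last lra.
rewrite mulrAC ler_pdivlMr // natrB; last by lia.
have -> : c * (m%:R - n%:R) = m%:R * (c - 1) + (m%:R - c * n%:R) by ring.
lra.
Qed.

End Main3.

Section Main4.
Variables (R : realType) (A : finType) (x : nat -> A).

Definition iset : set R := [set rho : R | 1 <= rho /\
     forall N : nat, exists V : seq A,
       (N <= size V)%N /\ is_prefix x V /\ is_prefix x (wpow V rho)].

Lemma iceE : ice R x = ereal_sup [set rho%:E | rho in iset].
Proof. by []. Qed.

Lemma ice_sub rho : iset rho -> @dset R A x rho.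
Proof.
move=> [r1 H] N; have [V [hV [_ hW]]] := H N.+1.
have V0 : (0 < size V)%N by lia.
have [cc [hsz hcq hyc _]] := @wpow_facts R A V rho V0 r1.
have q0 : (0:R) < (size V)%:R by rewrite ltr0n.
have hge : rho * (size V)%:R <= (size (wpow V rho))%:R.
  rewrite hsz natrD natrM.
  have -> : rho * (size V)%:R = (Num.truncn rho)%:R * (size V)%:R
     + (rho - (Num.truncn rho)%:R) * (size V)%:R by ring.
  by rewrite lerD2l.
exists [::], V, rho; split => //; split => //; split.
  rewrite cat0s; apply: (leq_trans (leqnSn N)); apply: (leq_trans hV).
  rewrite -(ler_nat R); apply: le_trans hge.
  by rewrite ler_peMl // ltW.
split => //.
by rewrite !cat0s ler_pdivlMr.
Qed.

Lemma ice_one : iset 1.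
Proof.
split => // N; exists (pref x N); split; first by rewrite size_mkseq.
split; first by rewrite /is_prefix size_mkseq.
rewrite /wpow truncn1 /= cats0 subrr mul0r ceil0 /= take0 cats0.
by rewrite /is_prefix size_mkseq.
Qed.

End Main4.

Section Reals.
Variable R : realType.
Definition f (a : R) := a / (a - 1).

Lemma f_gt1 a : 1 < a -> 1 < f a.
Proof. by move=> a1; rewrite /f ltr_pdivlMr; lra. Qed.

Lemma f_anti a b : 1 < a -> a < b -> f b < f a.
Proof.
move=> a1 ab; rewrite /f ltr_pdivrMr; last lra.
rewrite mulrAC ltr_pdivlMr; last lra.
have -> : a * (b - 1) = b * (a - 1) + (b - a) by ring.
by rewrite ltrDl subr_gt0.
Qed.

Lemma f_inv a : 1 < a -> f (f a) = a.
Proof.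
move=> a1; rewrite /f.
have a0 : a - 1 != 0 by rewrite subr_eq0 gt_eqF.
have -> : a / (a - 1) - 1 = 1 / (a - 1) by field.
by field.
Qed.

Lemma between (a : R) (e : \bar R) : (a%:E < e)%E -> exists c, a < c /\ (c%:E < e)%E.
Proof.
case: e => [r||] //; rewrite ?lte_fin => h.
  by exists ((a + r) / 2); split; [|rewrite lte_fin]; lra.
by exists (a + 1); split; [lra| rewrite ltry].
Qed.
End Reals.
Arguments f {R}. Arguments f_gt1 {R a}. Arguments f_anti {R a b}. Arguments f_inv {R a}. Arguments between {R a e}.

Theorem lemma9p3 (R : realType) (A : finType) (x : nat -> A) :
  (rep R x = 1%E <-> dio R x = +oo%E) /\
  (rep R x = +oo%E <-> dio R x = 1%E) /\
  (forall d : R, dio R x = d%:E -> 1 < d ->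
     rep R x = (d / (d - 1))%:E /\
     (rep R x <= match ice R x with
                 | r%:E => if (r == 1)%R then +oo else ((r / (r - 1))%R)%:E
                 | +oo => 1
                 | -oo => +oo
                 end)%E).
Proof.
have hr1 : (1 <= rep R x)%E := @rep_ge1 R A x.
have hS1 : @dset R A x 1 := @ice_sub R A x 1 (@ice_one R A x).
have ub : forall rho, @dset R A x rho -> (rho%:E <= dio R x)%E.
  by move=> rho h; rewrite dioE; apply: ereal_sup_ubound; exists rho.
have gt : forall a : R, (a%:E < dio R x)%E -> exists rho, @dset R A x rho /\ a < rho.
  move=> a; rewrite dioE => /ereal_sup_gt [_ [rho h <-]]; rewrite lte_fin => h2.
  by exists rho.
have hd1 : (1 <= dio R x)%E := ub _ hS1.
have Fle : forall rho, @dset R A x rho -> 1 < rho -> (rep R x <= (f rho)%:E)%E.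
  by move=> rho h1 h2; apply: rep_le_f.
have Fgt : forall c, 1 < c -> (rep R x < c%:E)%E -> @dset R A x (f c).
  by move=> c h1 h2; apply: dset_of_rep.
split; [split|split; [split|]].
- move=> hrep; case hD: (dio R x) => [d||] //; last by rewrite hD in hd1.
  pose M : R := `|d| + 2.
  have M1 : 1 < M by rewrite /M; have := normr_ge0 d; lra.
  have Md : d < M by rewrite /M; have := ler_norm d; lra.
  have c1 := f_gt1 M1.
  have := Fgt _ c1; rewrite f_inv // hrep lte_fin => /(_ c1) /ub.
  by rewrite hD lee_fin => h; rewrite ltNge h in Md.
- move=> hD; apply/le_anti; rewrite hr1 andbT.
  rewrite leNgt; apply/negP => /between [c [c1 hc]].
  have fc1 := f_gt1 c1.
  have [rho [hrho hlt]] : exists rho, @dset R A x rho /\ f c < rho by apply: gt; rewrite hD ltry.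
  have rho1 : 1 < rho by lra.
  have := Fle _ hrho rho1.
  have := f_anti fc1 hlt; rewrite f_inv // => h1 h2.
  have : (rep R x < rep R x)%E.
    by apply: (le_lt_trans h2); apply: lt_trans hc; rewrite lte_fin.
  by rewrite ltxx.
- move=> hrep; apply/le_anti; rewrite hd1 andbT.
  rewrite leNgt; apply/negP => /gt [rho [hrho r1]].
  by have := Fle _ hrho r1; rewrite hrep leye_eq.
- move=> hD; case hR: (rep R x) => [r||] //; last by rewrite hR in hr1.
  have r1 : 1 <= r by rewrite hR lee_fin in hr1.
  have c1 : 1 < r + 1 by lra.
  have := Fgt _ c1; rewrite hR lte_fin => /(_ ltac:(lra)) /ub.
  by rewrite hD lee_fin => h; have := f_gt1 c1; rewrite ltNge h.
move=> d hD d1.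
have fd1 := f_gt1 d1.
have hle : (rep R x <= (f d)%:E)%E.
  rewrite leNgt; apply/negP => /between [c [hc1 hc]].
  have c1 : 1 < c by lra.
  have frd : f c < d by rewrite -[X in _ < X](f_inv d1); apply: f_anti.
  have [rho [hrho hlt]] : exists rho, @dset R A x rho /\ f c < rho by apply: gt; rewrite hD lte_fin.
  have fc1 := f_gt1 c1.
  have rho1 : 1 < rho by lra.
  have := Fle _ hrho rho1.
  have := f_anti fc1 hlt; rewrite f_inv // => h1 h2.
  have : (rep R x < rep R x)%E.
    by apply: (le_lt_trans h2); apply: lt_trans hc; rewrite lte_fin.
  by rewrite ltxx.
have hge : ((f d)%:E <= rep R x)%E.
  rewrite leNgt; apply/negP => h.
  case hR: (rep R x) h => [r||] //; last by rewrite hR in hr1.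
  rewrite lte_fin => h.
  have r1 : 1 <= r by rewrite hR lee_fin in hr1.
  have c1 : 1 < (r + f d) / 2 by lra.
  have := Fgt _ c1; rewrite hR lte_fin => /(_ ltac:(lra)) /ub.
  rewrite hD lee_fin.
  have := f_anti c1 (ltac:(lra) : (r + f d) / 2 < f d).
  by rewrite f_inv //; lra.
have hrep : rep R x = (f d)%:E by apply/le_anti; rewrite hle hge.
split; first by rewrite hrep.
have hid : (ice R x <= dio R x)%E.
  rewrite iceE dioE; apply: ereal_sup_le => _ [r hr <-].
  by exists r => //; apply: (@ice_sub R A x).
have hi1 : (1 <= ice R x)%E.
  by rewrite iceE; apply: ereal_sup_ubound; exists 1 => //; apply: (@ice_one R A x).
rewrite hD in hid.
case hI: (ice R x) hid hi1 => [r||] //.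
rewrite !lee_fin => hrd hr1'.
case: eqP => [_|/eqP rn1]; first by rewrite leey.
have r1 : 1 < r by rewrite lt_neqAle eq_sym rn1.
rewrite hrep lee_fin -/(f r).
move: hrd; rewrite le_eqVlt => /orP [/eqP -> //|hrd].
exact/ltW/f_anti.
Qed.
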